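(* Let $X$ be a uniformly convex and uniformly smooth Banach space, $D_0$ a dislocation group on $X$ and $D\subset D_0$. Let $(u_k)\subset X$ be bounded, $M\in\mathbb N$, and let $(g_k^{(n)})_k\subset D$, $w^{(n)}\in X$, $n=1,\dots,M$, satisfy $g^{(1)}_k=I$, $(g^{(n)}_k)^{-1}u_k\rightharpoondown w^{(n)}$ for $n=1,\dots,M$, and $(g_k^{(n)})^{-1}g_k^{(m)}\rightharpoonup0$ whenever $n<m\le M$. Suppose there is a sequence $(g_k^{(M+1)})\subset D$ such that, along a subsequence, $(g_k^{(M+1)})^{-1}\big(u_k-w^{(1)}-g_k^{(2)}w^{(2)}-\dots-g_k^{(M)}w^{(M)}\big)\rightharpoondown w^{(M+1)}\ne0$. Then (along that subsequence) $(g_k^{(n)})^{-1}g_k^{(M+1)}\rightharpoonup0$ for $n=1,\dots,M$.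
   Context: Δ-convergence: $x_k\rightharpoondown x$ if for every $y\in X$, $\limsup_k(\|x_k-x\|-\|x_k-y\|)\le0$. Operator convergence $g_k\rightharpoonup g$: $g_kx\rightharpoonup gx$ weakly for all $x$; strong convergence: $g_kx\to gx$ in norm for all $x$. A group $D_0$ of bijective linear isometries of $X$ is a dislocation group if: $(\ast)$ whenever $(g_k)\subset D_0$ and $g_k\not\rightharpoonup0$, some subsequence has both $(g_{k_j})$ and $(g_{k_j}^{-1})$ strongly convergent; and $(\ast\ast)$ whenever $u_k\rightharpoondown0$, $w\in X$, $(g_k)\subset D_0$, $g_k\rightharpoonup0$, then $u_k+g_kw\rightharpoondown0$. *)

(* Defs.v *)
From Stdlib Require Import Reals Lra.
Open Scope R_scope.

Record Banach := mkBanach {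
  V :> Type;
  vadd : V -> V -> V;
  vopp : V -> V;
  vzero : V;
  vscal : R -> V -> V;
  vnorm : V -> R;
  vadd_assoc : forall x y z, vadd x (vadd y z) = vadd (vadd x y) z;
  vadd_comm : forall x y, vadd x y = vadd y x;
  vadd_zero : forall x, vadd x vzero = x;
  vadd_opp : forall x, vadd x (vopp x) = vzero;
  vscal_one : forall x, vscal 1 x = x;
  vscal_assoc : forall a b x, vscal a (vscal b x) = vscal (a * b) x;
  vscal_distr_v : forall a x y, vscal a (vadd x y) = vadd (vscal a x) (vscal a y);
  vscal_distr_s : forall a b x, vscal (a + b) x = vadd (vscal a x) (vscal b x);
  vnorm_nonneg : forall x, 0 <= vnorm x;
  vnorm_eq0 : forall x, vnorm x = 0 -> x = vzero;
  vnorm_scal : forall a x, vnorm (vscal a x) = Rabs a * vnorm x;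
  vnorm_triangle : forall x y, vnorm (vadd x y) <= vnorm x + vnorm y;
  vcomplete : forall s : nat -> V,
    (forall eps, 0 < eps -> exists N, forall m n, (N <= m)%nat -> (N <= n)%nat ->
        vnorm (vadd (s m) (vopp (s n))) < eps) ->
    exists l, forall eps, 0 < eps -> exists N, forall n, (N <= n)%nat ->
        vnorm (vadd (s n) (vopp l)) < eps
}.

Arguments vadd {_} _ _.
Arguments vopp {_} _.
Arguments vzero {_}.
Arguments vscal {_} _ _.
Arguments vnorm {_} _.

Definition vsub {X : Banach} (x y : X) : X := vadd x (vopp y).

Definition uniformly_convex (X : Banach) : Prop :=
  forall eps, 0 < eps <= 2 -> exists delta, 0 < delta /\
    forall x y : X, vnorm x <= 1 -> vnorm y <= 1 -> eps <= vnorm (vsub x y) ->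
      vnorm (vscal (1/2) (vadd x y)) <= 1 - delta.

(* Uniform smoothness: the modulus of smoothness
   rho(tau) = sup { (|x+tau y| + |x - tau y|)/2 - 1 : |x| = |y| = 1 }
   satisfies rho(tau)/tau -> 0 as tau -> 0+. *)
Definition uniformly_smooth (X : Banach) : Prop :=
  forall eps, 0 < eps -> exists delta, 0 < delta /\
    forall tau, 0 < tau < delta -> forall x y : X, vnorm x = 1 -> vnorm y = 1 ->
      (vnorm (vadd x (vscal tau y)) + vnorm (vsub x (vscal tau y))) / 2 - 1 <= eps * tau.

Definition bounded_linear_functional {X : Banach} (f : X -> R) : Prop :=
  (forall x y, f (vadd x y) = f x + f y) /\
  (forall a x, f (vscal a x) = a * f x) /\
  (exists C, forall x, Rabs (f x) <= C * vnorm x).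

Definition weak_conv {X : Banach} (x : nat -> X) (l : X) : Prop :=
  forall f : X -> R, bounded_linear_functional f -> Un_cv (fun k => f (x k)) (f l).

Definition strong_conv {X : Banach} (x : nat -> X) (l : X) : Prop :=
  Un_cv (fun k => vnorm (vsub (x k) l)) 0.

Definition limsup_nonpos (a : nat -> R) : Prop :=
  forall eps, 0 < eps -> exists N, forall k, (N <= k)%nat -> a k <= eps.

Definition delta_conv {X : Banach} (x : nat -> X) (l : X) : Prop :=
  forall y : X, limsup_nonpos (fun k => vnorm (vsub (x k) l) - vnorm (vsub (x k) y)).

Definition op_weak_conv {X : Banach} (g : nat -> X -> X) (h : X -> X) : Prop :=
  forall x, weak_conv (fun k => g k x) (h x).
Definition op_weak_conv_zero {X : Banach} (g : nat -> X -> X) : Prop :=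
  op_weak_conv g (fun _ => vzero).
Definition op_strong_conv {X : Banach} (g : nat -> X -> X) (h : X -> X) : Prop :=
  forall x, strong_conv (fun k => g k x) (h x).

Definition strictly_increasing (phi : nat -> nat) : Prop :=
  forall i j, (i < j)%nat -> (phi i < phi j)%nat.

Definition bij_lin_isometry {X : Banach} (g : X -> X) : Prop :=
  (forall x y, g (vadd x y) = vadd (g x) (g y)) /\
  (forall a x, g (vscal a x) = vscal a (g x)) /\
  (forall x, vnorm (g x) = vnorm x) /\
  (forall y, exists x, g x = y) /\
  (forall x x', g x = g x' -> x = x').

Definition is_inverse {X : Banach} (g ginv : X -> X) : Prop :=
  forall x, ginv (g x) = x /\ g (ginv x) = x.

Definition isometry_group {X : Banach} (D0 : (X -> X) -> Prop) : Prop :=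
  (forall g, D0 g -> bij_lin_isometry g) /\
  D0 (fun x => x) /\
  (forall g h, D0 g -> D0 h -> D0 (fun x => g (h x))) /\
  (forall g h, D0 g -> is_inverse g h -> D0 h).

(* Dislocation group.  Sequences of group elements are given together with
   their (unique) inverses. *)
Definition dislocation_group {X : Banach} (D0 : (X -> X) -> Prop) : Prop :=
  isometry_group D0 /\
  (forall g ginv : nat -> X -> X,
     (forall k, D0 (g k)) -> (forall k, is_inverse (g k) (ginv k)) ->
     ~ op_weak_conv_zero g ->
     exists phi, strictly_increasing phi /\
       (exists h, op_strong_conv (fun j => g (phi j)) h) /\
       (exists h', op_strong_conv (fun j => ginv (phi j)) h')) /\
  (forall (u : nat -> X) (w : X) (g : nat -> X -> X),
     delta_conv u vzero -> (forall k, D0 (g k)) -> op_weak_conv_zero g ->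
     delta_conv (fun k => vadd (u k) (g k w)) vzero).

Fixpoint vsum1 {X : Banach} (M : nat) (f : nat -> X) : X :=
  match M with
  | O => vzero
  | S m => vadd (vsum1 m f) (f (S m))
  end.

(* Main.v *)
Require Import Defs.
From Stdlib Require Import Reals Lra Lia Classical.
Open Scope R_scope.

Lemma vadd_0l (X : Banach) (x : X) : vadd vzero x = x.
Proof. rewrite vadd_comm; apply vadd_zero. Qed.

Lemma vopp_unique (X : Banach) (x y : X) : vadd x y = vzero -> y = vopp x.
Proof.
  intro H. rewrite <- (vadd_zero _ y). rewrite <- (vadd_opp _ x).
  rewrite vadd_assoc, (vadd_comm _ y x), H. apply vadd_0l.
Qed.

Lemma vopp_opp (X : Banach) (x : X) : vopp (vopp x) = x.
Proof. symmetry. apply vopp_unique. rewrite vadd_comm. apply vadd_opp. Qed.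

Lemma vopp_zero (X : Banach) : vopp (@vzero X) = vzero.
Proof. symmetry. apply vopp_unique. apply vadd_zero. Qed.

Lemma vopp_add (X : Banach) (x y : X) : vopp (vadd x y) = vadd (vopp x) (vopp y).
Proof.
  symmetry. apply vopp_unique.
  rewrite vadd_assoc, (vadd_comm _ (vadd x y) (vopp x)), vadd_assoc.
  rewrite (vadd_comm _ (vopp x) x), vadd_opp, vadd_0l. apply vadd_opp.
Qed.

Lemma vdouble_zero (X : Banach) (z : X) : z = vadd z z -> z = vzero.
Proof.
  intro H. transitivity (vadd (vadd z z) (vopp z)).
  - rewrite <- vadd_assoc, vadd_opp, vadd_zero. reflexivity.
  - rewrite <- H. apply vadd_opp.
Qed.

Lemma add_map_zero (X : Banach) (g : X -> X) :
  (forall x y, g (vadd x y) = vadd (g x) (g y)) -> g vzero = vzero.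
Proof. intro Hg. apply vdouble_zero. rewrite <- Hg, vadd_zero. reflexivity. Qed.

Lemma add_map_opp (X : Banach) (g : X -> X) :
  (forall x y, g (vadd x y) = vadd (g x) (g y)) -> forall x, g (vopp x) = vopp (g x).
Proof.
  intros Hg x. apply vopp_unique. rewrite <- Hg, vadd_opp. apply add_map_zero; auto.
Qed.

Lemma add_map_sub (X : Banach) (g : X -> X) :
  (forall x y, g (vadd x y) = vadd (g x) (g y)) -> forall x y, g (vsub x y) = vsub (g x) (g y).
Proof. intros Hg x y. unfold vsub. rewrite Hg, add_map_opp; auto. Qed.

Lemma vscal_zero (X : Banach) (x : X) : vscal 0 x = vzero.
Proof. apply vdouble_zero. rewrite <- vscal_distr_s. f_equal. ring. Qed.

Lemma vscal_m1 (X : Banach) (x : X) : vscal (-1) x = vopp x.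
Proof.
  apply vopp_unique. rewrite <- (vscal_one _ x) at 1. rewrite <- vscal_distr_s.
  replace (1 + -1) with 0 by ring. apply vscal_zero.
Qed.

Lemma vnorm_opp (X : Banach) (x : X) : vnorm (vopp x) = vnorm x.
Proof. rewrite <- vscal_m1, vnorm_scal. replace (Rabs (-1)) with 1 by (rewrite Rabs_left; lra). ring. Qed.

Lemma vnorm_zero (X : Banach) : vnorm (@vzero X) = 0.
Proof. rewrite <- (vscal_zero _ vzero), vnorm_scal, Rabs_R0. ring. Qed.

Lemma vsub_zero (X : Banach) (x : X) : vsub x vzero = x.
Proof. unfold vsub. rewrite vopp_zero. apply vadd_zero. Qed.

Lemma vnorm_sub_le (X : Banach) (x y : X) : vnorm (vsub x y) <= vnorm x + vnorm y.
Proof. unfold vsub. rewrite <- (vnorm_opp _ y). apply vnorm_triangle. Qed.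

Lemma vsub_add_cancel (X : Banach) (x y : X) : vadd (vsub x y) y = x.
Proof. unfold vsub. rewrite <- vadd_assoc, (vadd_comm _ (vopp y)), vadd_opp. apply vadd_zero. Qed.

Lemma vsub_chain (X : Banach) (a b c : X) : vadd (vsub a b) (vsub b c) = vsub a c.
Proof. unfold vsub. rewrite <- vadd_assoc, (vadd_assoc _ (vopp b)), (vadd_comm _ (vopp b)), vadd_opp, vadd_0l. reflexivity. Qed.

Lemma vnorm_rev_tri (X : Banach) (x y : X) : vnorm x - vnorm y <= vnorm (vsub x y).
Proof.
  pose proof (vnorm_triangle _ (vsub x y) y) as H. rewrite vsub_add_cancel in H. lra.
Qed.

Lemma vnorm_sub_tri (X : Banach) (a b c : X) : vnorm (vsub a c) <= vnorm (vsub a b) + vnorm (vsub b c).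
Proof. rewrite <- (vsub_chain _ a b c). apply vnorm_triangle. Qed.

Lemma shift_I1 (X : Banach) (x a c : X) : vsub (vadd x c) (vadd a c) = vsub x a.
Proof.
  unfold vsub. rewrite vopp_add, (vadd_comm _ (vopp a)), vadd_assoc, <- (vadd_assoc _ x), vadd_opp, vadd_zero.
  reflexivity.
Qed.

Lemma shift_I2 (X : Banach) (x c y : X) : vsub (vadd x c) y = vsub x (vsub y c).
Proof.
  unfold vsub. rewrite vopp_add, vopp_opp, (vadd_comm _ (vopp y)), vadd_assoc. reflexivity.
Qed.

Lemma shift_I3 (X : Banach) (x a c : X) : vadd (vadd (vadd x (vopp a)) c) a = vadd x c.
Proof.
  rewrite <- vadd_assoc, (vadd_comm _ c a), vadd_assoc, <- (vadd_assoc _ x), (vadd_comm _ (vopp a)), vadd_opp, vadd_zero.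
  reflexivity.
Qed.

Lemma sub_add_I (X : Banach) (u s t : X) : vsub u (vadd s t) = vadd (vsub u s) (vopp t).
Proof. unfold vsub. rewrite vopp_add, vadd_assoc. reflexivity. Qed.

Lemma U2 (X : Banach) (x c : X) : vsub (vsub x c) x = vopp c.
Proof. unfold vsub. rewrite (vadd_comm _ x), <- vadd_assoc, vadd_opp, vadd_zero. reflexivity. Qed.

Lemma U3 (X : Banach) (x c : X) : vsub x (vsub x c) = c.
Proof. unfold vsub. rewrite vopp_add, vopp_opp, vadd_assoc, vadd_opp, vadd_0l. reflexivity. Qed.

Lemma vscal_add_map (X : Banach) (t : R) : forall x y : X, vscal t (vadd x y) = vadd (vscal t x) (vscal t y).
Proof. intros; apply vscal_distr_v. Qed.

Lemma U4 (X : Banach) (t : R) (p q : X) : vsub (vscal t p) (vscal t q) = vscal t (vsub p q).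
Proof. symmetry. apply add_map_sub. apply vscal_add_map. Qed.

Lemma U5 (X : Banach) (t : R) (x c : X) :
  vscal (1/2) (vadd (vscal t (vsub x c)) (vscal t x)) = vscal t (vsub x (vscal (1/2) c)).
Proof.
  rewrite <- vscal_distr_v, vscal_assoc, Rmult_comm, <- vscal_assoc. f_equal.
  unfold vsub. rewrite (vadd_comm _ x (vopp c)), <- vadd_assoc, vadd_comm, vscal_distr_v.
  f_equal.
  - rewrite <- (vscal_one _ x) at 1 2. rewrite <- vscal_distr_s, vscal_assoc.
    replace (1/2 * (1+1)) with 1 by field. apply vscal_one.
  - apply add_map_opp. apply vscal_add_map.
Qed.

Lemma sinc_ge (phi : nat -> nat) : strictly_increasing phi -> forall i, (i <= phi i)%nat.
Proof.
  intros H i. induction i. lia. specialize (H i (S i) (Nat.lt_succ_diag_r i)). lia.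
Qed.

Lemma sinc_comp (phi psi : nat -> nat) : strictly_increasing phi -> strictly_increasing psi ->
  strictly_increasing (fun i => phi (psi i)).
Proof. intros H1 H2 i j Hij. apply H1, H2, Hij. Qed.

Lemma dc_ext (X : Banach) (x y : nat -> X) a : (forall k, x k = y k) -> delta_conv x a -> delta_conv y a.
Proof.
  intros E H z eps He. destruct (H z eps He) as [N HN]. exists N. intros k Hk.
  rewrite <- E. auto.
Qed.

Lemma dc_sub (X : Banach) (x : nat -> X) a phi : strictly_increasing phi -> delta_conv x a ->
  delta_conv (fun i => x (phi i)) a.
Proof.
  intros Hp H z eps He. destruct (H z eps He) as [N HN]. exists N. intros k Hk.
  apply HN. pose proof (sinc_ge phi Hp k). lia.
Qed.

Lemma dc_shift (X : Banach) (x : nat -> X) a c : delta_conv x a ->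
  delta_conv (fun k => vadd (x k) c) (vadd a c).
Proof.
  intros H y eps He. destruct (H (vsub y c) eps He) as [N HN]. exists N. intros k Hk.
  rewrite shift_I1, shift_I2. auto.
Qed.

Lemma dc_strong (X : Banach) (x : nat -> X) a : strong_conv x a -> delta_conv x a.
Proof.
  intros H y eps He. destruct (H eps He) as [N HN]. exists N. intros k Hk.
  specialize (HN k Hk). unfold R_dist in HN. rewrite Rminus_0_r in HN.
  pose proof (vnorm_nonneg _ (vsub (x k) y)).
  pose proof (Rle_abs (vnorm (vsub (x k) a))). lra.
Qed.

Lemma dc_zero_seq (X : Banach) : delta_conv (fun _ : nat => @vzero X) vzero.
Proof.
  intros y eps He. exists 0%nat. intros k _. rewrite vsub_zero, vnorm_zero.
  pose proof (vnorm_nonneg _ (vsub vzero y)). lra.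
Qed.

Lemma dc_add_weak0 (X : Banach) (D0 : (X -> X) -> Prop) (HD0 : dislocation_group D0)
  (x : nat -> X) a (C : nat -> X -> X) w :
  delta_conv x a -> (forall k, D0 (C k)) -> op_weak_conv_zero C ->
  delta_conv (fun k => vadd (x k) (C k w)) a.
Proof.
  intros Hx HC HCw. destruct HD0 as [_ [_ Hss]].
  pose proof (dc_shift _ x a (vopp a) Hx) as H1. rewrite vadd_opp in H1.
  pose proof (Hss _ w C H1 HC HCw) as H2.
  pose proof (dc_shift _ _ _ a H2) as H3. rewrite vadd_0l in H3.
  eapply dc_ext; [|exact H3]. intro k. simpl. apply shift_I3.
Qed.

Lemma dc_unique0 (X : Banach) (HUC : uniformly_convex X) (x : nat -> X) (c : X) (R0 : R) :
  (forall k, vnorm (x k) <= R0) -> delta_conv x c -> delta_conv x vzero -> c = vzero.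
Proof.
  intros Hb Hc H0. apply NNPP. intro Hne.
  set (d := vnorm c).
  assert (Hd : 0 < d).
  { pose proof (vnorm_nonneg _ c). destruct (Rle_lt_or_eq_dec 0 d H); auto.
    exfalso. apply Hne, vnorm_eq0. unfold d in e. auto. }
  assert (HR0 : 0 <= R0). { pose proof (Hb 0%nat). pose proof (vnorm_nonneg _ (x 0%nat)). lra. }
  set (R := R0 + d + 1).
  assert (HR : 0 < R) by (unfold R; lra).
  destruct (HUC (d / R)) as [delta [Hdel HUCd]].
  { split. apply Rdiv_lt_0_compat; lra.
    apply (Rmult_le_reg_r R); auto. unfold Rdiv. rewrite Rmult_assoc, Rinv_l by lra. unfold R; lra. }
  set (eps := d * delta / 8).
  assert (Heps : 0 < eps) by (unfold eps; apply Rdiv_lt_0_compat; [apply Rmult_lt_0_compat|]; lra).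
  destruct (Hc vzero eps Heps) as [N1 HN1].
  destruct (H0 c eps Heps) as [N2 HN2].
  destruct (Hc (vscal (1/2) c) eps Heps) as [N3 HN3].
  set (k := (N1 + N2 + N3)%nat).
  specialize (HN1 k ltac:(unfold k; lia)). specialize (HN2 k ltac:(unfold k; lia)).
  specialize (HN3 k ltac:(unfold k; lia)).
  rewrite vsub_zero in HN1, HN2.
  set (p := vsub (x k) c) in *. set (q := x k) in *.
  assert (Hpq : d <= vnorm p + vnorm q).
  { unfold d. rewrite <- (U3 _ (x k) c). fold p. rewrite Rplus_comm. apply vnorm_sub_le. }
  assert (Hq : vnorm q <= R0) by apply Hb.
  assert (Hp : vnorm p <= R0 + d). { unfold p. pose proof (vnorm_sub_le _ (x k) c). fold q in H. fold d in H. lra. }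
  set (r := Rmax (vnorm p) (vnorm q)).
  assert (Hr1 : vnorm p <= r) by apply Rmax_l.
  assert (Hr2 : vnorm q <= r) by apply Rmax_r.
  assert (Hr3 : r = vnorm p \/ r = vnorm q).
  { unfold r, Rmax. destruct (Rle_dec (vnorm p) (vnorm q)); auto. }
  assert (Hrpos : d / 2 <= r) by lra.
  assert (HrR : r <= R) by (unfold R; lra).
  assert (Hr0 : 0 < r) by lra.
  specialize (HUCd (vscal (1/r) p) (vscal (1/r) q)).
  assert (Hinvr : 0 < 1 / r) by (apply Rdiv_lt_0_compat; lra).
  assert (E1 : vsub (vscal (1/r) p) (vscal (1/r) q) = vscal (1/r) (vopp c)).
  { rewrite U4. unfold p, q. rewrite U2. reflexivity. }
  assert (E2 : vscal (1/2) (vadd (vscal (1/r) p) (vscal (1/r) q)) = vscal (1/r) (vsub (x k) (vscal (1/2) c))).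
  { unfold p, q. apply U5. }
  rewrite E1, E2, !vnorm_scal, vnorm_opp, Rabs_right in HUCd by lra.
  fold d in HUCd.
  set (m := vnorm (vsub (x k) (vscal (1 / 2) c))) in *.
  assert (Hm : m <= r * (1 - delta)).
  { assert (1 / r * vnorm p <= 1).
    { apply (Rmult_le_reg_l r); auto. field_simplify; lra. }
    assert (1 / r * vnorm q <= 1).
    { apply (Rmult_le_reg_l r); auto. field_simplify; lra. }
    assert (d / R <= 1 / r * d).
    { replace (1 / r * d) with (d / r) by (field; lra).
      unfold Rdiv. apply Rmult_le_compat_l; [lra|apply Rinv_le_contravar; lra]. }
    specialize (HUCd H H1 H2).
    apply (Rmult_le_compat_l r) in HUCd; [|lra].
    replace (r * (1 / r * m)) with m in HUCd by (field; lra). lra. }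
  assert (Hpr : r - eps <= vnorm p) by (destruct Hr3; lra).
  assert (Hm' : vnorm (vsub q (vscal (1/2) c)) <= r * (1 - delta)) by exact Hm.
  assert (r * delta <= 2 * eps) by nra.
  unfold eps in H. nra.
Qed.

Lemma inv_sym (X : Banach) (g h : X -> X) : is_inverse g h -> is_inverse h g.
Proof. intros H x. destruct (H x). split; auto. Qed.

Lemma inv_weak0 (X : Banach) (HUC : uniformly_convex X) (D0 : (X -> X) -> Prop)
  (HD0 : dislocation_group D0) (G H : nat -> X -> X) :
  (forall k, D0 (G k)) -> (forall k, D0 (H k)) -> (forall k, is_inverse (G k) (H k)) ->
  op_weak_conv_zero G -> op_weak_conv_zero H.
Proof.
  intros HG HH HGH HGw. apply NNPP. intro Hn.
  pose proof HD0 as [[Hiso _] [Hstar Hss]].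
  destruct (Hstar H G HH (fun k => inv_sym _ _ _ (HGH k)) Hn) as [psi [Hpsi [_ [h' Hh']]]].
  assert (Hall : forall w : X, w = vzero).
  { intro w.
    assert (Hd0 : delta_conv (fun j => G (psi j) w) vzero).
    { apply (dc_sub X (fun k => G k w) vzero psi Hpsi). eapply dc_ext; [|exact (Hss _ w G (dc_zero_seq X) HG HGw)].
      intro k. simpl. apply vadd_0l. }
    assert (Hd1 : delta_conv (fun j => G (psi j) w) (h' w)) by (apply dc_strong, Hh').
    assert (Hnorm : forall j, vnorm (G (psi j) w) = vnorm w).
    { intro j. destruct (Hiso _ (HG (psi j))) as [_ [_ [Hn' _]]]. auto. }
    assert (Hz : h' w = vzero).
    { apply (dc_unique0 X HUC _ _ (vnorm w) (fun j => Req_le _ _ (Hnorm j)) Hd1 Hd0). }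
    apply vnorm_eq0. apply NNPP. intro Hw.
    pose proof (vnorm_nonneg _ w).
    destruct (Hh' w (vnorm w)) as [N HN]. lra.
    specialize (HN N (le_n N)). unfold R_dist in HN.
    rewrite Hz, vsub_zero, Hnorm, Rminus_0_r, Rabs_right in HN; lra. }
  apply Hn. intros x f Hf. intros eps He. exists 0%nat. intros k _.
  rewrite (Hall (H k x)). unfold R_dist. simpl. rewrite Rminus_diag, Rabs_R0. lra.
Qed.

Lemma comp_inv (X : Banach) (a ai b bi : X -> X) : is_inverse a ai -> is_inverse b bi ->
  is_inverse (fun x => ai (b x)) (fun x => bi (a x)).
Proof.
  intros Ha Hb x. split.
  - destruct (Ha (b x)) as [_ E]. rewrite E. apply Hb.
  - destruct (Hb (a x)) as [_ E]. rewrite E. apply Ha.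
Qed.

Theorem lemma5p9
  (X : Banach) (HUC : uniformly_convex X) (HUS : uniformly_smooth X)
  (D0 D : (X -> X) -> Prop) (HD0 : dislocation_group D0)
  (HD : forall h, D h -> D0 h)
  (u : nat -> X) (Hu : exists C, forall k, vnorm (u k) <= C)
  (M : nat)
  (g ginv : nat -> nat -> X -> X) (w : nat -> X)
  (HgD : forall n k, (1 <= n <= M + 1)%nat -> D (g n k))
  (Hginv : forall n k, (1 <= n <= M + 1)%nat -> is_inverse (g n k) (ginv n k))
  (Hg1 : forall k x, g 1%nat k x = x)
  (Hw : forall n, (1 <= n <= M)%nat -> delta_conv (fun k => ginv n k (u k)) (w n))
  (Horth : forall n m, (1 <= n)%nat -> (n < m)%nat -> (m <= M)%nat ->
     op_weak_conv_zero (fun k x => ginv n k (g m k x)))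
  (phi : nat -> nat) (Hphi : strictly_increasing phi)
  (HM1 : delta_conv
     (fun j => ginv (M + 1)%nat (phi j)
        (vsub (u (phi j)) (vsum1 M (fun n => g n (phi j) (w n)))))
     (w (M + 1)%nat))
  (Hw0 : w (M + 1)%nat <> vzero) :
  forall n, (1 <= n <= M)%nat ->
    op_weak_conv_zero (fun j x => ginv n (phi j) (g (M + 1)%nat (phi j) x)).
Proof.
  intros n Hn. apply NNPP. intro Hnot.
  pose proof HD0 as [[Hiso [_ [Hcomp Hinvc]]] [Hstar Hss]].
  assert (gD0 : forall m k, (1 <= m <= M + 1)%nat -> D0 (g m k)) by (intros; apply HD, HgD; auto).
  assert (giD0 : forall m k, (1 <= m <= M + 1)%nat -> D0 (ginv m k))
    by (intros; eapply Hinvc; [apply gD0|apply Hginv]; auto).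
  assert (Hadd : forall h, D0 h -> forall x y, h (vadd x y) = vadd (h x) (h y))
    by (intros h Hh; apply (Hiso h Hh)).
  assert (Hnrm : forall h, D0 h -> forall x, vnorm (h x) = vnorm x)
    by (intros h Hh; apply (Hiso h Hh)).
  assert (invL : forall m k x, (1 <= m <= M + 1)%nat -> ginv m k (g m k x) = x)
    by (intros m k x Hm; apply (Hginv m k Hm x)).
  assert (cD0 : forall a b k, (1 <= a <= M + 1)%nat -> (1 <= b <= M + 1)%nat ->
     D0 (fun x => ginv a k (g b k x)))
    by (intros; apply Hcomp; [apply giD0|apply gD0]; auto).
  assert (cinv : forall a b k, (1 <= a <= M + 1)%nat -> (1 <= b <= M + 1)%nat ->
     is_inverse (fun x => ginv a k (g b k x)) (fun x => ginv b k (g a k x)))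
    by (intros; apply comp_inv; apply Hginv; auto).
  assert (Hbnd : forall p, (p <= M)%nat -> exists K, forall k,
     vnorm (vsum1 p (fun m => g m k (w m))) <= K).
  { induction p as [|p IH]; intro Hp.
    - exists 0. intro k. simpl. rewrite vnorm_zero. lra.
    - destruct (IH ltac:(lia)) as [K HK]. exists (K + vnorm (w (S p))). intro k. simpl.
      eapply Rle_trans; [apply vnorm_triangle|].
      rewrite (Hnrm _ (gD0 (S p) k ltac:(lia))). specialize (HK k). lra. }
  assert (Hv : forall p, (p <= M)%nat -> delta_conv
     (fun k => ginv n k (vsub (u k) (vsum1 p (fun m => g m k (w m)))))
     (if Nat.ltb p n then w n else vzero)).
  { induction p as [|p IH]; intro Hp.
    - replace (Nat.ltb 0 n) with true by (symmetry; apply Nat.ltb_lt; lia).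
      eapply dc_ext; [|apply (Hw n Hn)]. intro k. simpl. rewrite vsub_zero. reflexivity.
    - specialize (IH ltac:(lia)).
      assert (Eseq : forall k, ginv n k (vsub (u k) (vsum1 (S p) (fun m => g m k (w m)))) =
         vadd (ginv n k (vsub (u k) (vsum1 p (fun m => g m k (w m)))))
              (ginv n k (g (S p) k (vopp (w (S p)))))).
      { intro k. simpl. rewrite sub_add_I, (Hadd _ (giD0 n k ltac:(lia))).
        rewrite (add_map_opp _ _ (Hadd _ (gD0 (S p) k ltac:(lia)))). reflexivity. }
      destruct (Nat.eq_dec (S p) n) as [Heq|Hne].
      + subst n. replace (Nat.ltb p (S p)) with true in IH by (symmetry; apply Nat.ltb_lt; lia).
        replace (Nat.ltb (S p) (S p)) with false by (symmetry; apply Nat.ltb_ge; lia).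
        eapply dc_ext; [intro k; symmetry; apply Eseq|].
        eapply dc_ext; [intro k; symmetry; rewrite (invL (S p) k (vopp (w (S p)))) by lia; reflexivity|].
        pose proof (dc_shift _ _ _ (vopp (w (S p))) IH) as H1. rewrite vadd_opp in H1. exact H1.
      + replace (Nat.ltb (S p) n) with (Nat.ltb p n).
        2:{ destruct (Nat.ltb_spec p n); destruct (Nat.ltb_spec (S p) n); auto; lia. }
        eapply dc_ext; [intro k; symmetry; apply Eseq|].
        apply (dc_add_weak0 X D0 HD0 _ _ (fun k x => ginv n k (g (S p) k x))); auto.
        * intro k. apply cD0; lia.
        * destruct (Nat.lt_ge_cases n (S p)).
          -- apply Horth; lia.
          -- apply (inv_weak0 X HUC D0 HD0 (fun k x => ginv (S p) k (g n k x))).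
             ++ intro k. apply cD0; lia.
             ++ intro k. apply cD0; lia.
             ++ intro k. apply cinv; lia.
             ++ apply Horth; lia. }
  destruct (Hstar (fun j x => ginv n (phi j) (g (M + 1)%nat (phi j) x))
                  (fun j x => ginv (M + 1)%nat (phi j) (g n (phi j) x)))
    as [psi [Hpsi [[h Hh] _]]].
  { intro j. apply cD0; lia. }
  { intro j. apply cinv; lia. }
  { exact Hnot. }
  set (kk := fun i => phi (psi i)).
  assert (Hkk : strictly_increasing kk) by (unfold kk; exact (sinc_comp phi psi Hphi Hpsi)).
  set (Y := fun k => vsub (u k) (vsum1 M (fun m => g m k (w m)))).
  set (z := fun i => ginv (M + 1)%nat (kk i) (Y (kk i))).
  assert (Hz1 : delta_conv z (w (M + 1)%nat)).
  { exact (dc_sub X _ _ psi Hpsi HM1). }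
  pose proof (dc_sub X _ _ kk Hkk (Hv M (le_n M))) as Hvv.
  replace (Nat.ltb M n) with false in Hvv by (symmetry; apply Nat.ltb_ge; lia).
  assert (Hz0 : delta_conv z vzero).
  { intros y eps He.
    destruct (Hh y (eps / 2) ltac:(lra)) as [N1 HN1].
    destruct (Hvv (h y) (eps / 2) ltac:(lra)) as [N2 HN2].
    exists (N1 + N2)%nat. intros i Hi.
    specialize (HN1 i ltac:(lia)). specialize (HN2 i ltac:(lia)).
    unfold R_dist in HN1. rewrite Rminus_0_r in HN1. simpl in HN1, HN2.
    fold (Y (kk i)) in HN2. fold (kk i) in HN1.
    set (k := kk i) in *.
    assert (E0 : vnorm (vsub (z i) vzero) = vnorm (vsub (ginv n k (Y k)) vzero)).
    { rewrite !vsub_zero. unfold z. fold k.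
      rewrite (Hnrm _ (giD0 (M + 1)%nat k ltac:(lia))), (Hnrm _ (giD0 n k ltac:(lia))). reflexivity. }
    assert (E1 : vnorm (vsub (z i) y) = vnorm (vsub (ginv n k (Y k)) (ginv n k (g (M + 1)%nat k y)))).
    { unfold z. fold k.
      rewrite <- (invL (M + 1)%nat k y) at 1 by lia.
      rewrite <- (add_map_sub _ _ (Hadd _ (giD0 (M + 1)%nat k ltac:(lia)))).
      rewrite <- (add_map_sub _ _ (Hadd _ (giD0 n k ltac:(lia)))).
      rewrite (Hnrm _ (giD0 (M + 1)%nat k ltac:(lia))), (Hnrm _ (giD0 n k ltac:(lia))). reflexivity. }
    rewrite E0, E1.
    pose proof (vnorm_sub_tri _ (ginv n k (Y k)) (ginv n k (g (M + 1)%nat k y)) (h y)).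
    pose proof (Rle_abs (vnorm (vsub (ginv n k (g (M + 1)%nat k y)) (h y)))).
    lra. }
  destruct Hu as [C HC].
  destruct (Hbnd M (le_n M)) as [K HK].
  apply Hw0. apply (dc_unique0 X HUC z _ (C + K)); auto.
  intro i. unfold z. rewrite (Hnrm _ (giD0 (M + 1)%nat (kk i) ltac:(lia))). unfold Y.
  eapply Rle_trans; [apply vnorm_sub_le|]. specialize (HC (kk i)). specialize (HK (kk i)). lra.
Qed.
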